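(* Let $k\ge 1$ and let $H$ be a connected $k$-regular $k$-edge-colorable graph with no loops or semi-edges (multiple ordinary edges allowed). Let $G$ be a connected simple $k$-regular graph and $u\in V(G)$ a vertex such that for every $x\in V(H)$ and every bijection $E_G(u)\to E_H(x)$ there is a covering projection from $G$ to $H$ mapping $u$ to $x$ and extending that bijection. Let $G_u$ be obtained from $G$ by splitting $u$ into $k$ pendant vertices: each edge $e\in E_G(u)$ is kept, but its end-vertex $u$ is replaced by a new vertex $u_e$ of degree 1. Then: (a) for every $x\in V(H)$ and every bijection $\sigma_x:E_G(u)\to E_H(x)$ there is a partial covering projection from $G_u$ onto $H$ that extends $\sigma_x$ and maps every $u_e$, $e\in E_G(u)$, to $x$; (b) in every partial covering projection from $G_u$ onto $H$, all the pendant vertices $u_e$, $e\in E_G(u)$, are mapped to the same vertex of $H$; (c) in every partial covering projection from $G_u$ onto $H$, the $k$ pendant edges are mapped to pairwise distinct edges of $H$ (incident with the common image of the pendant vertices).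
   Context: $E_G(u)$ denotes the set of edges of $G$ incident with $u$. A covering projection between graphs without loops and semi-edges is a map sending vertices to vertices and edges to edges, preserving incidences, such that for every edge $xy$ of the target its preimage is a perfect matching between the preimages of $x$ and $y$. A partial covering projection from $G'$ onto $H$ is a map $f:V(G')\cup E(G')\to V(H)\cup E(H)$ that is surjective on vertices and on edges, sends vertices to vertices and edges to edges, preserves incidences, and such that for every edge $xy$ of $H$ its preimage is a matching (not necessarily perfect) each of whose edges joins a vertex of $f^{-1}(x)$ to a vertex of $f^{-1}(y)$. *)

(* Defs.v *)
From mathcomp Require Import all_boot.
Set Implicit Arguments. Unset Strict Implicit. Unset Printing Implicit Defensive.

(* Finite multigraphs: every edge has two end-vertices end1 e, end2 e
   (unordered: the orientation carries no meaning).  Semi-edges are not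
   representable; loops are excluded via [loopless]. *)
Record mgraph := MGraph {
  V : finType;
  E : finType;
  end1 : E -> V;
  end2 : E -> V }.

Section Basic.
Variable g : mgraph.

Definition incident (e : E g) (v : V g) : bool := (end1 e == v) || (end2 e == v).

Definition Einc (v : V g) : {set E g} := [set e | incident e v].

Definition loopless : Prop := forall e : E g, end1 e != end2 e.

Definition simple_graph : Prop :=
  loopless /\
  forall e f : E g, [set end1 e; end2 e] = [set end1 f; end2 f] -> e = f.

Definition regular (k : nat) : Prop := forall v : V g, #|Einc v| = k.

Definition adj : rel (V g) := fun x y =>
  [exists e : E g, ((end1 e == x) && (end2 e == y)) || ((end1 e == y) && (end2 e == x))].

Definition connected : Prop := forall x y : V g, connect adj x y.

Definition edge_colorable (k : nat) : Prop :=
  exists c : E g -> 'I_k, forall e f : E g, e != f ->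
    (exists v, incident e v && incident f v) -> c e != c f.
End Basic.

Section Maps.
Variables (g h : mgraph) (fV : V g -> V h) (fE : E g -> E h).

Definition preserves_incidence : Prop :=
  forall e : E g,
    (fV (end1 e) = end1 (fE e) /\ fV (end2 e) = end2 (fE e)) \/
    (fV (end1 e) = end2 (fE e) /\ fV (end2 e) = end1 (fE e)).

(* covering projection: the preimage of every edge xy is a perfect matching
   between f^-1(x) and f^-1(y) *)
Definition covering_projection : Prop :=
  preserves_incidence /\
  forall (a : E h) (v : V g), (fV v == end1 a) || (fV v == end2 a) ->
    #|[set e in Einc v | fE e == a]| = 1.

Definition partial_covering_projection : Prop :=
  (forall y : V h, exists v, fV v = y) /\
  (forall a : E h, exists e, fE e = a) /\
  preserves_incidence /\
  forall (a : E h) (v : V g), #|[set e in Einc v | fE e == a]| <= 1.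
End Maps.

Definition bij_on (g h : mgraph) (u : V g) (x : V h) (sigma : E g -> E h) : Prop :=
  {in Einc u &, injective sigma} /\ sigma @: Einc u = Einc x.

Section Split.
Variables (g : mgraph) (u : V g).

Definition split_vertex : finType :=
  ({v : V g | v != u} + {e : E g | e \in Einc u})%type.

Lemma split_end1_inc (e : E g) : (end1 e != u) = false -> e \in Einc u.
Proof. by move/negbFE/eqP => <-; rewrite inE /incident eqxx. Qed.

Lemma split_end2_inc (e : E g) : (end2 e != u) = false -> e \in Einc u.
Proof. by move/negbFE/eqP => <-; rewrite inE /incident eqxx orbT. Qed.

Definition split_end1 (e : E g) : split_vertex :=
  (if end1 e != u as b return (end1 e != u) = b -> split_vertex
   then fun H => inl (exist _ (end1 e) H)
   else fun H => inr (exist _ e (split_end1_inc H))) erefl.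

Definition split_end2 (e : E g) : split_vertex :=
  (if end2 e != u as b return (end2 e != u) = b -> split_vertex
   then fun H => inl (exist _ (end2 e) H)
   else fun H => inr (exist _ e (split_end2_inc H))) erefl.

Definition split_graph : mgraph :=
  @MGraph split_vertex (E g) split_end1 split_end2.

Definition pendant (p : {e : E g | e \in Einc u}) : V split_graph := inr p.
End Split.

(* Main.v *)
Require Import Defs.
From mathcomp Require Import all_boot zify.
Set Implicit Arguments. Unset Strict Implicit. Unset Printing Implicit Defensive.


Lemma sum_eqv (T : finType) (P : pred T) (a : T) :
  \sum_(v | P v) ((a == v) : nat) = P a.
Proof.
case: (boolP (P a)) => Pa.
  rewrite (bigD1 a) //= eqxx big1 // => v /andP[_ /negbTE].
  by rewrite eq_sym => ->.
rewrite big1 // => v Pv; case: eqP => // E; by rewrite E Pv in Pa.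
Qed.

Lemma handshake (g : mgraph) (P : pred (V g)) (F : pred (E g)) : loopless g ->
  \sum_(v | P v) #|[set e in Einc v | F e]| =
  \sum_(e | F e) (P (end1 e) + P (end2 e)).
Proof.
move=> lg.
have X: forall v, #|[set e in Einc v | F e]| = \sum_(e | F e) (incident e v : nat).
  {move=> v; rewrite -sum1_card big_mkcond [RHS]big_mkcond /=.
  by apply eq_bigr => e _; rewrite !inE; case: (F e); case: incident. }
rewrite (eq_bigr _ (fun v _ => X v)).
rewrite exchange_big /=; apply eq_bigr => e Fe.
have Y: forall v, (incident e v : nat) = (end1 e == v) + (end2 e == v).
  { move=> v; rewrite /incident; case: eqP => [<-|] //=; case: eqP => // E.
  by have := lg e; rewrite E eqxx. }
rewrite (eq_bigr _ (fun v _ => Y v)).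
by rewrite big_split /= !sum_eqv.
Qed.

Lemma sum_pair (I : finType) (F : pred I) (b1 b2 : I -> bool) :
  \sum_(i | F i) (b1 i + b2 i) =
  2 * \sum_(i | F i) (b1 i && b2 i) + #|[set i | F i & b1 i != b2 i]|.
Proof.
rewrite -sum1dep_card [\sum_(i | F i && _) 1]big_mkcondr big_distrr -big_split /=.
by apply eq_bigr => i _; case: b1; case: b2.
Qed.

Definition proper_col (g : mgraph) k (col : E g -> 'I_k) :=
  forall e f, e != f -> (exists v, incident e v && incident f v) -> col e != col f.

Lemma inc_pres (g h : mgraph) (fV : V g -> V h) (fE : E g -> E h) e v :
  preserves_incidence fV fE -> incident e v -> incident (fE e) (fV v).
Proof.
move=> pi; rewrite /incident => /orP[]/eqP<-;
  by case: (pi e) => [[E1 E2]|[E1 E2]]; rewrite ?E1 ?E2 eqxx ?orbT.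
Qed.

Lemma color_once (g h : mgraph) k (fV : V g -> V h) (fE : E g -> E h)
  (col : E h -> 'I_k) (v : V g) c :
  preserves_incidence fV fE -> (forall a, #|[set e in Einc v | fE e == a]| <= 1) ->
  #|Einc v| = k -> proper_col col ->
  #|[set e in Einc v | col (fE e) == c]| = 1.
Proof.
move=> pi le1 Hk pc.
pose hh := fun e => col (fE e).
have inj: {in Einc v &, injective hh}.
  move=> e1 e2 H1 H2 Heq; apply/eqP; apply/negPn/negP => ne.
  case: (eqVneq (fE e1) (fE e2)) => [E12|N12].
    have := le1 (fE e1); apply/negP; rewrite -ltnNge.
    apply: (@leq_trans #|[set e1; e2]|); first by rewrite cards2 ne.
    apply/subset_leq_card/subsetP => x; rewrite !inE => /orP[]/eqP->;
      by move: (H1) (H2); rewrite !inE => H1' H2'; rewrite ?H1' ?H2' ?E12 eqxx.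
  suff: col (fE e1) != col (fE e2) by rewrite /hh in Heq; rewrite Heq eqxx.
  apply: (pc _ _ N12); exists (fV v); move: H1 H2; rewrite !inE => H1 H2.
  by rewrite (inc_pres pi H1) (inc_pres pi H2).
have im: hh @: Einc v = [set: 'I_k].
  apply/eqP; rewrite eqEcard subsetT cardsT card_ord. by rewrite (card_in_imset inj) Hk leqnn.
have : c \in hh @: Einc v by rewrite im inE.
case/imsetP => e0 He0 Hc.
apply/eqP; rewrite eqn_leq; apply/andP; split.
  apply/card_le1_eqP => x y; rewrite !inE => /andP[Hx /eqP cx] /andP[Hy /eqP cy].
  by apply inj; rewrite ?inE // /hh cx cy.
by rewrite card_gt0; apply/set0Pn; exists e0; rewrite inE He0 /=; apply/eqP; by rewrite Hc.
Qed.

Lemma edge_once (g h : mgraph) k (fV : V g -> V h) (fE : E g -> E h)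
  (col : E h -> 'I_k) (v : V g) a :
  preserves_incidence fV fE -> (forall a, #|[set e in Einc v | fE e == a]| <= 1) ->
  #|Einc v| = k -> proper_col col -> incident a (fV v) ->
  #|[set e in Einc v | fE e == a]| = 1.
Proof.
move=> pi le1 Hk pc Ha.
have := color_once (col a) pi le1 Hk pc.
move/eqP/cards1P => [e0 He0].
have : e0 \in [set e0] by rewrite inE.
rewrite -He0 inE => /andP[H0 /eqP C0].
apply/eqP; rewrite eqn_leq le1 card_gt0; apply/set0Pn; exists e0.
rewrite inE H0 /=; apply/negPn/negP => N.
suff: col (fE e0) != col a by rewrite C0 eqxx.
apply: (pc _ _ N); exists (fV v); rewrite inE in H0; by rewrite Ha (inc_pres pi H0).
Qed.

Lemma bij_exists (G H : mgraph) (u : V G) (x : V H) k :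
  #|Einc u| = k -> #|Einc x| = k -> 1 <= k -> exists sigma, bij_on u x sigma.
Proof.
move=> Hu Hx k1.
have: 0 < #|Einc u| by rewrite Hu.
rewrite card_gt0 => /set0Pn [e0 He0].
have Heq : #|Einc u| = #|Einc x| by rewrite Hu Hx.
pose sigma := fun e => @enum_val _ (mem (Einc x)) (cast_ord Heq (enum_rank_in He0 e)).
have inj : {in Einc u &, injective sigma}.
  move=> e1 e2 H1 H2 /enum_val_inj /cast_ord_inj E.
  by rewrite -(enum_rankK_in He0 H1) -(enum_rankK_in He0 H2) E.
exists sigma; split => //.
apply/eqP; rewrite eqEcard card_in_imset // -Heq leqnn andbT.
apply/subsetP => a /imsetP [e _ ->]; exact: enum_valP.
Qed.

Lemma sum_fib (T U : finType) (f : T -> U) :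
  \sum_(y : U) #|[set w | f w == y]| = #|T|.
Proof.
transitivity (\sum_(w : T) 1); last by rewrite sum1_card.
rewrite (partition_big f predT) //=.
by apply eq_bigr => y _; rewrite -sum1dep_card.
Qed.

Lemma sum_ind (T : finType) (P : pred T) (b : pred T) :
  \sum_(i | P i) (b i : nat) = #|[set i | P i & b i]|.
Proof. by rewrite -sum1dep_card big_mkcondr /=; apply eq_bigr => i _; case: b. Qed.

Lemma card_set1_pred (T : finType) (s : T) (P : pred T) :
  #|[set e in [set s] | P e]| = P s.
Proof.
case: (boolP (P s)) => Ps.
  suff ->: [set e in [set s] | P e] = [set s] by rewrite cards1.
  apply/setP => e; rewrite !inE.
  by case: eqP => // ->; rewrite Ps.
suff ->: [set e in [set s] | P e] = set0 by rewrite cards0.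
apply/setP => e; rewrite !inE.
by case: eqP => // ->; rewrite (negbTE Ps).
Qed.

Lemma handshake_parity (g : mgraph) (P : pred (V g)) (F : pred (E g)) : loopless g ->
  odd (\sum_(v | P v) #|[set e in Einc v | F e]|) =
  odd #|[set e | F e & P (end1 e) != P (end2 e)]|.
Proof.
move=> lg; rewrite handshake // sum_pair oddD oddM /=.
done.
Qed.

Lemma ends_one (g h : mgraph) (fV : V g -> V h) (fE : E g -> E h) a x e :
  preserves_incidence fV fE -> end1 a != end2 a -> incident a x -> fE e = a ->
  (fV (end1 e) == x) + (fV (end2 e) == x) = 1.
Proof.
move=> pi na Ha He; rewrite -He in na Ha.
have nb : end2 (fE e) != end1 (fE e) by rewrite eq_sym.
case: (pi e) => [[E1 E2]|[E1 E2]]; rewrite E1 E2;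
  by move: Ha; rewrite /incident => /orP[]/eqP <-; rewrite eqxx ?(negbTE na) ?(negbTE nb).
Qed.

Lemma fibre_count (g h : mgraph) (fV : V g -> V h) (fE : E g -> E h) (x : V h) a :
  loopless g -> preserves_incidence fV fE -> end1 a != end2 a -> incident a x ->
  \sum_(v | fV v == x) #|[set e in Einc v | fE e == a]| = #|[set e | fE e == a]|.
Proof.
move=> lg pi na Ha; rewrite handshake // -sum1dep_card.
apply eq_bigr => e /eqP He; exact: (ends_one pi na Ha He).
Qed.

Lemma cov_le1 (g h : mgraph) (fV : V g -> V h) (fE : E g -> E h) :
  covering_projection fV fE -> forall a v, #|[set e in Einc v | fE e == a]| <= 1.
Proof.
move=> [pi cv] a v.
case: (set_0Vmem [set e in Einc v | fE e == a]) => [->|[e]]; first by rewrite cards0.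
rewrite !inE => /andP[He /eqP Hea].
have := inc_pres pi He; rewrite Hea /incident => Hi.
by rewrite cv // eq_sym orbC eq_sym orbC.
Qed.

Lemma id_pres (h : mgraph) : preserves_incidence (@id (V h)) (@id (E h)).
Proof. by move=> e; left. Qed.

Lemma id_le1 (h : mgraph) (v : V h) a : #|[set e in Einc v | id e == a]| <= 1.
Proof.
apply: (@leq_trans #|[set a]|); last by rewrite cards1.
by apply/subset_leq_card/subsetP => e; rewrite !inE => /andP[_ ->].
Qed.

Lemma cov_card (G H : mgraph) (gV : V G -> V H) (gE : E G -> E H) (y0 : V H) :
  loopless G -> loopless H -> connected H -> covering_projection gV gE ->
  #|V G| = #|[set v | gV v == y0]| * #|V H|.
Proof.
move=> lG lH cH cov.
pose F y := #|[set v | gV v == y]|.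
have Fa : forall a x, incident a x -> F x = #|[set e | gE e == a]|.
  move=> a x Ha; rewrite /F -(fibre_count lG cov.1 (lH a) Ha) -sum1dep_card.
  apply eq_bigr => v /eqP Hv; apply/esym; apply: (cov.2); rewrite Hv.
  by move: Ha; rewrite /incident !(eq_sym x).
have cl : closed (@adj H) [pred y | F y == F y0].
  move=> x y /existsP [a /orP [] /andP [/eqP <- /eqP <-]]; rewrite !inE.
    by rewrite (Fa a (end1 a)) ?(Fa a (end2 a)) // /incident eqxx ?orbT.
  by rewrite (Fa a (end1 a)) ?(Fa a (end2 a)) // /incident eqxx ?orbT.
have allF : forall y, F y = F y0.
  move=> y; have := closed_connect cl (cH y0 y); rewrite !inE eqxx => /esym/eqP //.
have -> : #|V G| = \sum_(y : V H) F y0.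
  by rewrite -(sum_fib gV); apply eq_bigr => y _; exact: allF.
by rewrite sum_nat_const mulnC.
Qed.

Lemma cov_even (G H : mgraph) k (gV : V G -> V H) (gE : E G -> E H) (col : E H -> 'I_k) :
  0 < k -> loopless G -> regular G k -> proper_col col -> covering_projection gV gE ->
  ~~ odd #|V G|.
Proof.
move=> k0 lG rG pc cov.
have := handshake_parity predT (fun e => col (gE e) == Ordinal k0) lG.
rewrite (eq_bigr (fun _ => 1)) ?sum1_card.
  move=> ->; rewrite (_ : [set e | _ & _] = set0) ?cards0 //.
  by apply/setP => e; rewrite !inE eqxx andbF.
move=> v _; exact: (color_once _ cov.1 (fun a => cov_le1 cov a v) (rG v) pc).
Qed.


Section Split.
Variables (G : mgraph) (u : V G).

Lemma split_end1_cases e :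
  {w | split_end1 u e = inl w & val w = end1 e} +
  {p | split_end1 u e = inr p & end1 e = u /\ sval p = e}.
Proof.
rewrite /split_end1.
suff: forall b (Hb : (end1 e != u) = b),
  {w | (if b as b' return (end1 e != u) = b' -> split_vertex u then fun H => inl (exist _ (end1 e) H) else fun H => inr (exist _ e (split_end1_inc H))) Hb = inl w & val w = end1 e} +
  {p | (if b as b' return (end1 e != u) = b' -> split_vertex u then fun H => inl (exist _ (end1 e) H) else fun H => inr (exist _ e (split_end1_inc H))) Hb = inr p & end1 e = u /\ sval p = e}.
  by move/(_ _ erefl).
case => H0.
  by left; exists (exist _ (end1 e) H0).
by right; exists (exist _ e (split_end1_inc H0)) => //; split => //; apply/eqP; move/negbFE: H0.
Qed.

Lemma split_end2_cases e :
  {w | split_end2 u e = inl w & val w = end2 e} +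
  {p | split_end2 u e = inr p & end2 e = u /\ sval p = e}.
Proof.
rewrite /split_end2.
suff: forall b (Hb : (end2 e != u) = b),
  {w | (if b as b' return (end2 e != u) = b' -> split_vertex u then fun H => inl (exist _ (end2 e) H) else fun H => inr (exist _ e (split_end2_inc H))) Hb = inl w & val w = end2 e} +
  {p | (if b as b' return (end2 e != u) = b' -> split_vertex u then fun H => inl (exist _ (end2 e) H) else fun H => inr (exist _ e (split_end2_inc H))) Hb = inr p & end2 e = u /\ sval p = e}.
  by move/(_ _ erefl).
case => H0.
  by left; exists (exist _ (end2 e) H0).
by right; exists (exist _ e (split_end2_inc H0)) => //; split => //; apply/eqP; move/negbFE: H0.
Qed.

Definition Gs := split_graph u.
Definition Pend := {e : E G | e \in Einc u}.
Definition NP := {v : V G | v != u}.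

Lemma s1_inl e (w : NP) : (split_end1 u e == inl w) = (end1 e == val w).
Proof.
case: (split_end1_cases e) => [[w' -> <-]|[p -> [Hu _]]].
  by apply/eqP/eqP => [[->]|/val_inj ->].
by rewrite Hu [_ == val w]eq_sym (negbTE (valP w)).
Qed.

Lemma s2_inl e (w : NP) : (split_end2 u e == inl w) = (end2 e == val w).
Proof.
case: (split_end2_cases e) => [[w' -> <-]|[p -> [Hu _]]].
  by apply/eqP/eqP => [[->]|/val_inj ->].
by rewrite Hu [_ == val w]eq_sym (negbTE (valP w)).
Qed.

Lemma s1_inr e (p : Pend) : (split_end1 u e == inr p) = (end1 e == u) && (e == sval p).
Proof.
case: (split_end1_cases e) => [[w' -> Hw]|[p' -> [Hu Hp]]].
  by rewrite -Hw (negbTE (valP w')).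
rewrite Hu eqxx /= -Hp; by apply/eqP/eqP => [[->]|/val_inj ->].
Qed.

Lemma s2_inr e (p : Pend) : (split_end2 u e == inr p) = (end2 e == u) && (e == sval p).
Proof.
case: (split_end2_cases e) => [[w' -> Hw]|[p' -> [Hu Hp]]].
  by rewrite -Hw (negbTE (valP w')).
rewrite Hu eqxx /= -Hp; by apply/eqP/eqP => [[->]|/val_inj ->].
Qed.

Lemma inc_inl e (w : NP) : @incident Gs e (inl w) = @incident G e (val w).
Proof. by rewrite /incident /= s1_inl s2_inl. Qed.

Lemma inc_inr e (p : Pend) : @incident Gs e (inr p) = (e == sval p).
Proof.
rewrite /incident /= s1_inr s2_inr -andb_orl.
case: (eqVneq e (sval p)) => [->|_]; rewrite ?andbT ?andbF //.
by have := svalP p; rewrite inE.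
Qed.

Lemma Einc_inl (w : NP) : @Einc Gs (inl w) = @Einc G (val w).
Proof. by apply/setP => e; rewrite !inE inc_inl. Qed.

Lemma Einc_inr (p : Pend) : @Einc Gs (inr p) = [set sval p].
Proof. by apply/setP => e; rewrite !inE inc_inr. Qed.

Lemma split_loopless : loopless G -> loopless Gs.
Proof.
move=> lg e /=.
case: (split_end1_cases e) => [[w -> Hw]|[p -> [Hu Hp]]];
case: (split_end2_cases e) => [[w' -> Hw']|[p' -> [Hu' Hp']]] //.
  by apply/eqP => [[E]]; have := lg e; rewrite -Hw -Hw' E eqxx.
by have := lg e; rewrite Hu Hu' eqxx.
Qed.

Lemma card_NP : #|{: NP}| = #|V G|.-1.
Proof. by rewrite card_sig -(cardC1 u); apply: eq_card => v; rewrite !inE. Qed.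

Lemma card_Pend : #|{: Pend}| = #|Einc u|.
Proof. by rewrite card_sig; apply: eq_card => v; rewrite !inE. Qed.

Lemma sum_Gs (F : V Gs -> nat) (P : pred (V Gs)) :
  \sum_(v | P v) F v = \sum_(w : NP | P (inl w)) F (inl w) + \sum_(p : Pend | P (inr p)) F (inr p).
Proof. exact: big_sumType. Qed.

End Split.


Lemma arith1 n h m A : 1 <= n * h -> 1 <= A -> A <= h -> n * h - 1 + A = (m+1) * h -> A = 1.
Proof. move=> *. case: (leqP (m+1) n) => Hc.
  have := leq_mul Hc (leqnn h); lia.
have := leq_mul Hc (leqnn h); rewrite mulSn; lia. Qed.

Lemma crossE n t : ((n < t) != (n.+1 < t)) = (t == n.+1).
Proof. case: ltngtP => H; case: ltngtP; lia. Qed.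

Lemma all_one k (q : 'I_k -> nat) : (forall c, 0 < q c) -> \sum_c q c = k -> forall c, q c = 1.
Proof.
move=> pos S c.
have: \sum_c' (q c' - 1) == 0.
  have E : \sum_c' (q c' - 1) + \sum_(c' : 'I_k) 1 = \sum_c' q c'.
    by rewrite -big_split; apply eq_bigr => c' _ /=; have := pos c'; lia.
  move: E; rewrite S sum1_card card_ord; lia.
rewrite sum_nat_eq0 => /forallP /(_ c) /=; have := pos c; lia.
Qed.

Section Core.
Variables (k : nat) (H G : mgraph) (u : V G) (col : E H -> 'I_k).
Variables (fV : V (split_graph u) -> V H) (fE : E (split_graph u) -> E H).
Variables (lG : loopless G) (lH : loopless H) (rG : regular G k) (rH : regular H k).
Variables (pc : proper_col col) (pcp : partial_covering_projection fV fE).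
Variables (evG : ~~ odd #|V G|).

Let pi : preserves_incidence fV fE := pcp.2.2.1.
Let le1 : forall a v, #|[set e in Einc v | fE e == a]| <= 1 := pcp.2.2.2.

Lemma deg_inl (w : NP u) : #|@Einc (Gs u) (inl w)| = k.
Proof. by rewrite Einc_inl rG. Qed.

Definition q c := #|[set p : Pend u | col (fE (sval p)) == c]|.

Lemma q_odd c : odd (q c).
Proof.
have := handshake_parity predT (fun e => col (fE e) == c) (split_loopless lG).
rewrite (_ : [set e | _ & _] = set0); last by apply/setP => e; rewrite !inE eqxx andbF.
rewrite cards0 /= sum_Gs.
rewrite (eq_bigr (fun _ => 1)); last first.
  by move=> w _; exact: (color_once c pi (fun a => le1 a _) (deg_inl w) pc).
rewrite (eq_bigr (fun p : Pend u => (col (fE (sval p)) == c) : nat)); last first.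
  by move=> p _; rewrite Einc_inr card_set1_pred.
rewrite sum1_card sum_ind /q.
have -> : #|[pred w : NP u | true]| = #|V G|.-1 by rewrite -(card_NP u); apply: eq_card.
have : 0 < #|V G| by apply/card_gt0P; exists u.
rewrite (_ : [set i | true & _] = [set p : Pend u | col (fE (sval p)) == c]); last first.
  by apply/setP => p; rewrite !inE.
move: evG; case: #|V G| => // n /=; rewrite negbK oddD => -> _ /=.
by case: odd.
Qed.

Lemma q_one c : q c = 1.
Proof.
apply: all_one => [c'|].
  by have := q_odd c'; case: (q c').
rewrite /q (sum_fib (fun p : Pend u => col (fE (sval p)))) card_Pend rG //.
Qed.

Lemma pend_inj (p1 p2 : Pend u) : fE (sval p1) = fE (sval p2) -> p1 = p2.
Proof.
move=> E; have := q_one (col (fE (sval p1))).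
rewrite /q => /eqP; rewrite eqn_leq => /andP [/card_le1_eqP L _].
by apply/esym/L; rewrite inE ?E eqxx.
Qed.

Lemma partc : {in Einc u &, injective (fE : E G -> E H)} /\
  (forall p : Pend u, incident (fE (sval p)) (fV (pendant p))).
Proof.
split.
  move=> e1 e2 H1 H2 E.
  by have := pend_inj (p1 := exist _ e1 H1) (p2 := exist _ e2 H2) E => [[]].
move=> p; apply: (inc_pres pi); by rewrite inc_inr.
Qed.

Definition N (x : V H) := #|[set w : NP u | fV (inl w) == x]|.
Definition Pc a (x : V H) := #|[set p : Pend u | (fV (inr p) == x) && (fE (sval p) == a)]|.

Lemma Kid a x : incident a x -> #|[set e | fE e == a]| = N x + Pc a x.
Proof.
move=> Ha.
rewrite -(fibre_count (split_loopless lG) pi (lH a) Ha) sum_Gs.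
congr (_ + _).
  rewrite /N -sum1dep_card; apply eq_bigr => w /eqP Hw.
  apply: (edge_once pi (fun b => le1 b _) (deg_inl w) pc); by rewrite Hw.
rewrite (eq_bigr (fun p : Pend u => (fE (sval p) == a) : nat)); last first.
  by move=> p _; rewrite Einc_inr card_set1_pred.
by rewrite sum_ind /Pc.
Qed.

Definition xp (p : Pend u) := fV (inr p).
Definition ap (p : Pend u) := fE (sval p).
Definition yp (p : Pend u) := if end1 (ap p) == xp p then end2 (ap p) else end1 (ap p).

Lemma inc_xp p : incident (ap p) (xp p).
Proof. exact: partc.2 p. Qed.

Lemma ends_p p : ((end1 (ap p) == xp p) && (end2 (ap p) == yp p)) ||
                 ((end1 (ap p) == yp p) && (end2 (ap p) == xp p)).
Proof.
rewrite /yp; have := inc_xp p; rewrite /incident.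
by case: eqP => [->|_] /=; rewrite !eqxx //= orbF.
Qed.

Lemma inc_yp p : incident (ap p) (yp p).
Proof. by have := ends_p p; rewrite /incident; case/orP => /andP [H1 H2]; rewrite ?H2 ?orbT // ?H1. Qed.

Lemma yp_ne p : yp p != xp p.
Proof.
have := lH (ap p); have := ends_p p.
by case/orP => /andP [/eqP -> /eqP ->] //; rewrite eq_sym.
Qed.

Lemma Pc_x p : Pc (ap p) (xp p) = 1.
Proof.
apply/eqP; rewrite eqn_leq; apply/andP; split.
  apply/card_le1_eqP => q1 q2; rewrite !inE => /andP [_ /eqP E1] /andP [_ /eqP E2].
  by apply: pend_inj; rewrite E1 E2.
by rewrite card_gt0; apply/set0Pn; exists p; rewrite inE !eqxx.
Qed.

Lemma Pc_y p : Pc (ap p) (yp p) = 0.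
Proof.
apply/eqP; rewrite cards_eq0; apply/eqP/setP => q0; rewrite !inE.
apply/negP => /andP [/eqP E1 /eqP E2].
have Eq : q0 = p by apply: pend_inj.
by move: (yp_ne p); rewrite -E1 Eq /xp eqxx.
Qed.

Lemma N_yp p : N (yp p) = (N (xp p)).+1.
Proof.
have := Kid (inc_xp p); rewrite (Kid (inc_yp p)) Pc_x Pc_y; lia.
Qed.

Lemma N_nopend a : (forall p : Pend u, ap p != a) -> N (end1 a) = N (end2 a).
Proof.
move=> np.
have P0 : forall x, Pc a x = 0.
  move=> x; apply/eqP; rewrite cards_eq0; apply/eqP/setP => q0; rewrite !inE.
  by rewrite (negbTE (np q0)) andbF.
have := Kid (a := a) (x := end1 a); rewrite (Kid (a := a) (x := end2 a)) ?P0 /incident ?eqxx ?orbT //.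
by rewrite !addn0 => ->.
Qed.

Definition cross t a := (N (end1 a) < t) != (N (end2 a) < t).

Lemma cross_p p t : cross t (ap p) = (t == (N (xp p)).+1).
Proof.
rewrite /cross; have := ends_p p; case/orP => /andP [/eqP -> /eqP ->];
  rewrite N_yp -crossE //; by rewrite eq_sym.
Qed.

Lemma cross_ex t a : cross t a -> exists p, ap p = a.
Proof.
move=> cr; case: (boolP [exists p, ap p == a]) => [/existsP [p /eqP <-]|]; first by exists p.
rewrite negb_exists => /forallP np.
by move: cr; rewrite /cross N_nopend ?eqxx.
Qed.

Lemma parity_p p t :
  odd #|[set y | N y < t]| = (t == (N (xp p)).+1).
Proof.
have := handshake_parity (fun y => N y < t) (fun a => col a == col (ap p)) lH.
rewrite (eq_bigr (fun _ => 1)); last first.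
  move=> y _; exact: (color_once (col (ap p)) (@id_pres H) (fun a => id_le1 y a) (rH y) pc).
rewrite sum1dep_card => ->.
case: (boolP (t == (N (xp p)).+1)) => Ht.
  suff ->: [set e | col e == col (ap p) & (N (end1 e) < t) != (N (end2 e) < t)] = [set ap p] by rewrite cards1.
  apply/setP => a; rewrite !inE; apply/idP/idP.
    case/andP => /eqP Ca cr; have [r Hr] := cross_ex cr.
    suff: r = p by move=> E; rewrite -Hr E.
    have := q_one (col (ap p)); rewrite /q => /eqP; rewrite eqn_leq => /andP [/card_le1_eqP L _].
    by apply: L; rewrite inE -?Ca -?Hr eqxx.
  move/eqP => ->; rewrite eqxx /=; have := cross_p p t; rewrite /cross => ->; exact: Ht.
suff ->: [set e | col e == col (ap p) & (N (end1 e) < t) != (N (end2 e) < t)] = set0 by rewrite cards0.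
apply/setP => a; rewrite !inE; apply/negP => /andP [/eqP Ca cr].
have [r Hr] := cross_ex cr.
have Eq : r = p.
  have := q_one (col (ap p)); rewrite /q => /eqP; rewrite eqn_leq => /andP [/card_le1_eqP L _].
  by apply: L; rewrite inE -?Ca -?Hr eqxx.
by move: cr; rewrite -Hr Eq -/(cross t (ap p)) cross_p (negbTE Ht).
Qed.


Lemma partb (cH : connected H) n (hVG : #|V G| = n * #|V H|) (p r : Pend u) :
  fV (pendant p) = fV (pendant r).
Proof.
have Nr : forall r, N (xp r) = N (xp p).
  move=> r0; have := parity_p p (N (xp r0)).+1; rewrite (parity_p r0) eqxx.
  by move/esym/eqP => [].
set m := N (xp p).
have crm : forall t a, cross t a -> t = m.+1.
  move=> t a cr; have [r0 Hr] := cross_ex cr.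
  by move: cr; rewrite -Hr cross_p Nr => /eqP.
have cl : forall t, t != m.+1 -> closed (@adj H) [pred y | N y < t].
  move=> t Ht x y /existsP [a Ha].
  have nc : ~~ cross t a by apply/negP => /crm E; rewrite E eqxx in Ht.
  move: nc; rewrite /cross negbK => /eqP E.
  by case/orP: Ha => /andP [/eqP <- /eqP <-]; rewrite !inE E.
have lo : forall y, m <= N y.
  move=> y; have := closed_connect (cl m _) (cH (xp p) y).
  rewrite !inE ltnn => /(_ _) E.
  rewrite leqNgt -E //; lia.
have hi : forall y, N y < m.+2.
  move=> y; have := closed_connect (cl m.+2 _) (cH (xp p) y).
  rewrite !inE /m ltnS leqnSn => /(_ _) E.
  rewrite -E //; lia.
have S1 : \sum_(y : V H) N y = #|V G|.-1.
  by rewrite /N (sum_fib (fun w : NP u => fV (inl w))) card_NP.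
have S2 : \sum_(y : V H) (N y + (N y == m)) = \sum_(y : V H) m.+1.
  apply eq_bigr => y _; have := lo y; have := hi y.
  case: eqP => [->|]; rewrite ?addn1 ?addn0 //; lia.
move: S2; rewrite big_split /= sum_ind S1 sum_nat_const => S2.
set A := [set y | true & N y == m] in S2.
have xA : forall r0, xp r0 \in A by move=> r0; rewrite inE /= Nr eqxx.
have A1 : #|A| = 1.
  apply: (@arith1 n #|V H| m); rewrite -?hVG.
  - by apply/card_gt0P; exists u.
  - by apply/card_gt0P; exists (xp p).
  - exact: max_card.
  - rewrite subn1 S2 addn1 mulnC. done.
move/eqP: A1; rewrite eqn_leq => /andP [/card_le1_eqP L _].
by apply: L; apply: xA.
Qed.

End Core.


Lemma gV_surj (G H : mgraph) (gV : V G -> V H) (gE : E G -> E H) (u : V G) :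
  loopless G -> loopless H -> connected H -> covering_projection gV gE ->
  forall y, exists v, gV v = y.
Proof.
move=> lG lH cH cov y.
have E1 := cov_card y lG lH cH cov; have E2 := cov_card (gV u) lG lH cH cov.
have pos : 0 < #|[set v | gV v == gV u]| by apply/card_gt0P; exists u; rewrite inE.
have hpos : 0 < #|V H| by apply/card_gt0P; exists y.
have : 0 < #|[set v | gV v == y]|.
  move: E1; rewrite E2 => /eqP; rewrite eqn_mul2r => /orP [/eqP|/eqP <- //].
  by move=> h0; rewrite h0 in hpos.
by case/card_gt0P => v; rewrite inE => /eqP; exists v.
Qed.

Section PartA.
Variables (k : nat) (H G : mgraph) (u : V G) (x : V H).
Variables (gV : V G -> V H) (gE : E G -> E H).
Variables (k1 : 1 <= k) (lG : loopless G) (lH : loopless H) (cH : connected H) (rG : regular G k).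
Variables (cov : covering_projection gV gE) (gu : gV u = x).

Definition fVa (v : V (split_graph u)) : V H :=
  match v with inl w => gV (val w) | inr _ => x end.

Lemma fVa_end1 e : fVa (split_end1 u e) = gV (end1 e).
Proof. by case: (split_end1_cases u e) => [[w -> <-]|[p -> [Hu _]]] //=; rewrite Hu gu. Qed.
Lemma fVa_end2 e : fVa (split_end2 u e) = gV (end2 e).
Proof. by case: (split_end2_cases u e) => [[w -> <-]|[p -> [Hu _]]] //=; rewrite Hu gu. Qed.

Lemma partA : partial_covering_projection fVa (gE : E (split_graph u) -> E H).
Proof.
have surj := gV_surj u lG lH cH cov.
split; [|split; [|split]].
- move=> y; case: (eqVneq y x) => [->|nyx].
    have : 0 < #|Einc u| by rewrite rG.
    case/card_gt0P => e0 He0; by exists (inr (exist _ e0 He0)).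
  have [v Hv] := surj y.
  have nvu : v != u by apply/eqP => E; rewrite -Hv E gu eqxx in nyx.
  by exists (inl (exist _ v nvu)).
- move=> a; have [v Hv] := surj (end1 a).
  have := cov.2 a v; rewrite Hv eqxx => /(_ isT) /eqP /cards1P [e He].
  have : e \in [set e] by rewrite inE.
  by rewrite -He inE => /andP [_ /eqP <-]; exists e.
- move=> e /=; rewrite fVa_end1 fVa_end2; exact: cov.1.
- move=> a [w|p].
    rewrite Einc_inl; exact: cov_le1 cov a (val w).
  rewrite Einc_inr; apply: (@leq_trans #|[set sval p]|); last by rewrite cards1.
  by apply/subset_leq_card/subsetP => e; rewrite inE => /andP [].
Qed.
End PartA.


Theorem mainTheorem6 (k : nat) (H G : mgraph) (u : V G) :
  1 <= k ->
  loopless H -> connected H -> regular H k -> edge_colorable H k ->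
  simple_graph G -> connected G -> regular G k ->
  (forall (x : V H) (sigma : E G -> E H), bij_on u x sigma ->
     exists (fV : V G -> V H) (fE : E G -> E H),
       covering_projection fV fE /\ fV u = x /\
       {in Einc u, forall e, fE e = sigma e}) ->
  (* (a) *)
  (forall (x : V H) (sigma : E G -> E H), bij_on u x sigma ->
     exists (fV : V (split_graph u) -> V H) (fE : E (split_graph u) -> E H),
       partial_covering_projection fV fE /\
       (forall e : E G, e \in Einc u -> fE e = sigma e) /\
       (forall p : {e : E G | e \in Einc u}, fV (pendant p) = x)) /\
  (* (b) *)
  (forall (fV : V (split_graph u) -> V H) (fE : E (split_graph u) -> E H),
     partial_covering_projection fV fE ->
     forall p q : {e : E G | e \in Einc u}, fV (pendant p) = fV (pendant q)) /\
  (* (c) *)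
  (forall (fV : V (split_graph u) -> V H) (fE : E (split_graph u) -> E H),
     partial_covering_projection fV fE ->
     {in Einc u &, injective (fE : E G -> E H)} /\
     (forall p : {e : E G | e \in Einc u}, incident (fE (sval p)) (fV (pendant p)))).
Proof.
move=> k1 lH cH rH [col pc] [lG _] _ rG hyp.
have pc' : proper_col col := pc.
have : 0 < #|Einc u| by rewrite rG.
case/card_gt0P => e0 He0.
have cov_of : forall x0 : V H, exists gV gE, covering_projection gV gE /\ gV u = x0 /\
   {in Einc u, forall e, gE e = gE e}.
  move=> x0; have [sigma bs] := bij_exists (rG u) (rH x0) k1.
  have [gV [gE [cov [gu _]]]] := hyp x0 sigma bs.
  by exists gV, gE.
have facts : forall x0 : V H, (~~ odd #|V G|) /\ exists n, #|V G| = n * #|V H|.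
  move=> x0; have [gV [gE [cov _]]] := cov_of x0.
  split; first exact: (cov_even k1 lG rG pc' cov).
  by exists #|[set v | gV v == x0]|; exact: (cov_card x0 lG lH cH cov).
split; [|split].
- move=> x sigma bs.
  have [gV [gE [cov [gu hs]]]] := hyp x sigma bs.
  exists (@fVa _ _ u x gV), gE; split; first exact: (partA k1 lG lH cH rG cov gu).
  split; first by move=> e He; apply: hs.
  by [].
- move=> fV fE pcp p q.
  have [evG [n hn]] := facts (fV (pendant p)).
  exact: (partb lG lH rG rH pc' pcp evG cH hn).
- move=> fV fE pcp.
  have [evG _] := facts (fV (pendant (exist _ e0 He0))).
  exact: (partc lG rG pc' pcp evG).
Qed.
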